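(* Let $P\subseteq\mathbb{R}^n$ be a closed convex set, $c:\mathbb{R}^n\to\mathbb{R}$, $A\in\mathbb{R}^{I\times n}$ with rows $A_{i\bullet}$, $\eta\in\mathbb{R}^I$, scalars $\psi_{ij}$ ($i=0,\dots,I$, $j=1,\dots,J_i$) with $\psi_{ij}^\pm=\max(\pm\psi_{ij},0)$, and continuous functions $\phi_{ij},\varphi_{ij}:\mathbb{R}^n\to\mathbb{R}$. Let $\bar x\in P$. Then there exists $\bar\varepsilon>0$ (depending on $\bar x$) such that for every $\varepsilon\in(0,\bar\varepsilon]$: (A) if $\bar x$ is a local maximizer of the M-HSCOP (maximize $\theta_{\rm MHS}$ over $X_{\rm MHS}$), then $\bar x$ is a local maximizer of $(\mathrm{P}^\varepsilon_{\rm MHS})$ (maximize $\theta^\varepsilon_{\rm MHS}$ over $X^\varepsilon_{\rm MHS}$); (B) if $\bar x$ satisfies the local sign-invariance condition below and $\bar x$ is a local maximizer of $(\mathrm{P}^\varepsilon_{\rm MHS})$, then $\bar x$ is a local maximizer of the M-HSCOP. Local sign-invariance condition: for all $i=0,1,\dots,I$, $\varphi_{ij}$ is nonpositive on a neighborhood of $\bar x$ for every $j\in\mathcal{J}^+_{i,0}(\bar x)$, and $\phi_{ij}$ is nonnegative on a neighborhood of $\bar x$ for every $j\in\mathcal{J}^-_{i,0}(\bar x)$.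
   Context: $\mathbf{1}_S$ is the indicator of $S\subseteq\mathbb{R}$. The M-HSCOP has objective $\theta_{\rm MHS}(x)=c(x)+\sum_{j=1}^{J_0}\psi_{0j}\mathbf{1}_{[0,\infty)}(\phi_{0j}(x))\mathbf{1}_{(0,\infty)}(\varphi_{0j}(x))$ and feasible set $X_{\rm MHS}=\{x\in P: A_{i\bullet}x+\sum_{j=1}^{J_i}\psi_{ij}\mathbf{1}_{[0,\infty)}(\phi_{ij}(x))\mathbf{1}_{(0,\infty)}(\varphi_{ij}(x))\ge\eta_i,\ i=1,\dots,I\}$. For $\varepsilon>0$, $(\mathrm{P}^\varepsilon_{\rm MHS})$ has objective $\theta^\varepsilon_{\rm MHS}(x)=c(x)+\sum_{j=1}^{J_0}\psi_{0j}^+\mathbf{1}_{[0,\infty)}(\phi_{0j}(x))\mathbf{1}_{[\varepsilon,\infty)}(\varphi_{0j}(x))-\sum_{j=1}^{J_0}\psi_{0j}^-\mathbf{1}_{(-\varepsilon,\infty)}(\phi_{0j}(x))\mathbf{1}_{(0,\infty)}(\varphi_{0j}(x))$ and feasible set $X^\varepsilon_{\rm MHS}=\{x\in P: A_{i\bullet}x+\sum_{j}\psi_{ij}^+\mathbf{1}_{[0,\infty)}(\phi_{ij}(x))\mathbf{1}_{[\varepsilon,\infty)}(\varphi_{ij}(x))-\sum_j\psi_{ij}^-\mathbf{1}_{(-\varepsilon,\infty)}(\phi_{ij}(x))\mathbf{1}_{(0,\infty)}(\varphi_{ij}(x))\ge\eta_i,\ i=1,\dots,I\}$. A local maximizer of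 $f$ on $X$ is $\bar x\in X$ with a neighborhood $\mathcal{N}$ such that $f(\bar x)\ge f(x)$ for all $x\in X\cap\mathcal{N}$. Index sets: $\mathcal{J}^+_{i,0}(\bar x)=\{j\in\{1,\dots,J_i\}:\psi_{ij}>0,\ \varphi_{ij}(\bar x)=0\}$ and $\mathcal{J}^-_{i,0}(\bar x)=\{j\in\{1,\dots,J_i\}:\psi_{ij}<0,\ \phi_{ij}(\bar x)=0\}$. *)

(* Defs.v *)
From HB Require Import structures.
From mathcomp Require Import all_boot all_order all_algebra.
From mathcomp Require Import all_classical all_reals all_analysis.
Set Implicit Arguments. Unset Strict Implicit. Unset Printing Implicit Defensive.
Import Order.TTheory GRing.Theory Num.Theory.
Import numFieldNormedType.Exports.
Local Open Scope classical_set_scope.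
Local Open Scope ring_scope.

Section Defs.
Variables (R : realType) (n : nat).

Definition ind (S : set R) (t : R) : R := if `[< S t >] then 1 else 0.

Definition pospart (a : R) : R := Num.max a 0.
Definition negpart (a : R) : R := Num.max (- a) 0.

Definition rowdot (I : nat) (A : 'M[R]_(I, n)) (i : 'I_I) (x : 'rV[R]_n) : R :=
  \sum_(k < n) A i k * x ord0 k.

(* Data of the problem: index i = 0 is the objective, index i = k.+1 is the
   constraint with row k of A (k : 'I_I). J i is J_i, sums run over j = 1..J_i. *)

Definition hs_term (J : nat -> nat) (psi : nat -> nat -> R)
  (phi varphi : nat -> nat -> 'rV[R]_n -> R) (i : nat) (x : 'rV[R]_n) : R :=
  \sum_(1 <= j < (J i).+1)
     psi i j * ind `[0, +oo[ (phi i j x) * ind `]0, +oo[ (varphi i j x).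

Definition hs_term_eps (eps : R) (J : nat -> nat) (psi : nat -> nat -> R)
  (phi varphi : nat -> nat -> 'rV[R]_n -> R) (i : nat) (x : 'rV[R]_n) : R :=
  \sum_(1 <= j < (J i).+1)
     pospart (psi i j) * ind `[0, +oo[ (phi i j x) * ind `[eps, +oo[ (varphi i j x)
  - \sum_(1 <= j < (J i).+1)
     negpart (psi i j) * ind `]- eps, +oo[ (phi i j x) * ind `]0, +oo[ (varphi i j x).

Definition theta_MHS (c : 'rV[R]_n -> R) J psi phi varphi (x : 'rV[R]_n) : R :=
  c x + hs_term J psi phi varphi 0 x.

Definition X_MHS (P : set 'rV[R]_n) (I : nat) (A : 'M[R]_(I, n)) (eta : 'I_I -> R)
  J psi phi varphi : set 'rV[R]_n :=
  [set x | P x /\ forall k : 'I_I,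
     rowdot A k x + hs_term J psi phi varphi k.+1 x >= eta k].

Definition theta_eps (eps : R) (c : 'rV[R]_n -> R) J psi phi varphi
  (x : 'rV[R]_n) : R :=
  c x + hs_term_eps eps J psi phi varphi 0 x.

Definition X_eps (eps : R) (P : set 'rV[R]_n) (I : nat) (A : 'M[R]_(I, n))
  (eta : 'I_I -> R) J psi phi varphi : set 'rV[R]_n :=
  [set x | P x /\ forall k : 'I_I,
     rowdot A k x + hs_term_eps eps J psi phi varphi k.+1 x >= eta k].

Definition local_max (f : 'rV[R]_n -> R) (X : set 'rV[R]_n) (xb : 'rV[R]_n) : Prop :=
  X xb /\ exists N, nbhs xb N /\ forall x, X x -> N x -> f x <= f xb.

Definition sign_invariance (I : nat) (J : nat -> nat) (psi : nat -> nat -> R)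
  (phi varphi : nat -> nat -> 'rV[R]_n -> R) (xb : 'rV[R]_n) : Prop :=
  forall i j, (i <= I)%N -> (1 <= j <= J i)%N ->
    (psi i j > 0 -> varphi i j xb = 0 -> \forall x \near xb, varphi i j x <= 0) /\
    (psi i j < 0 -> phi i j xb = 0 -> \forall x \near xb, phi i j x >= 0).

End Defs.

(* Main.v *)
Require Import Defs.
From HB Require Import structures.
From mathcomp Require Import all_boot all_order all_algebra.
From mathcomp Require Import all_classical all_reals all_analysis.
Import Order.TTheory GRing.Theory Num.Theory.
Import numFieldNormedType.Exports.
Local Open Scope classical_set_scope.
Local Open Scope ring_scope.
From mathcomp Require Import ring lra.
Set Implicit Arguments. Unset Strict Implicit.
Lemma pos_ge0 (R : realType) (a : R) : 0 <= a -> pospart a = a.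
Proof. rewrite /pospart /Order.max; case: ifPn => h; lra. Qed.
Lemma pos_le0 (R : realType) (a : R) : a <= 0 -> pospart a = 0.
Proof. rewrite /pospart /Order.max; case: ifPn => h; lra. Qed.
Lemma neg_ge0 (R : realType) (a : R) : 0 <= a -> negpart a = 0.
Proof. rewrite /negpart /Order.max; case: ifPn => h; lra. Qed.
Lemma neg_le0 (R : realType) (a : R) : a <= 0 -> negpart a = - a.
Proof. rewrite /negpart /Order.max; case: ifPn => h; lra. Qed.

Lemma ind_ge (R : realType) (a t : R) : ind `[a, +oo[ t = if a <= t then 1 else 0.
Proof.
rewrite /ind; case: asboolP => h; case: ifPn => h2 //; exfalso.
  by move: h; rewrite /= in_itv /= andbT (negbTE h2).
by apply: h; rewrite /= in_itv /= andbT.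
Qed.
Lemma ind_gt (R : realType) (a t : R) : ind `]a, +oo[ t = if a < t then 1 else 0.
Proof.
rewrite /ind; case: asboolP => h; case: ifPn => h2 //; exfalso.
  by move: h; rewrite /= in_itv /= andbT (negbTE h2).
by apply: h; rewrite /= in_itv /= andbT.
Qed.

Lemma fin_eps (R : realType) (m : nat) (Q : nat -> R -> Prop) :
  (forall k, (k < m)%N -> exists e : R, 0 < e /\ forall eps, 0 < eps -> eps <= e -> Q k eps) ->
  exists e : R, 0 < e /\ forall eps, 0 < eps -> eps <= e -> forall k, (k < m)%N -> Q k eps.
Proof.
elim: m => [|m IH] H; first by exists 1; split => // eps _ _ k.
have [e1 [e10 He1]] := IH (fun k hk => H k (ltnW hk)).
have [e2 [e20 He2]] := H m (ltnSn m).
exists (Num.min e1 e2); split; first by rewrite lt_min e10 e20.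
move=> eps ep; rewrite le_min => /andP[h1 h2] k; rewrite ltnS leq_eqVlt.
case/orP => [/eqP->|hk]; first exact: He2.
exact: He1.
Qed.

Lemma near_fin (T : Type) (F : set_system T) (FF : Filter F) (m : nat) (Q : nat -> T -> Prop) :
  (forall k, (k < m)%N -> F (Q k)) -> F (fun x => forall k, (k < m)%N -> Q k x).
Proof.
elim: m => [|m IH] H; first by apply: filterE => x k.
apply: filterS2 (IH (fun k hk => H k (ltnW hk))) (H m (ltnSn m)) => x h1 h2 k.
rewrite ltnS leq_eqVlt; case/orP => [/eqP->|hk] //; exact: h1.
Qed.

Section Terms.
Variables (R : realType) (n : nat) (psi : nat -> nat -> R)
  (phi varphi : nat -> nat -> 'rV[R]_n -> R).

Definition tt i j x := psi i j * ind `[0, +oo[ (phi i j x) * ind `]0, +oo[ (varphi i j x).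
Definition te (eps : R) i j x :=
  pospart (psi i j) * ind `[0, +oo[ (phi i j x) * ind `[eps, +oo[ (varphi i j x)
  - negpart (psi i j) * ind `]- eps, +oo[ (phi i j x) * ind `]0, +oo[ (varphi i j x).

Lemma hs_eps_sum eps J i x :
  hs_term_eps eps J psi phi varphi i x = \sum_(1 <= j < (J i).+1) te eps i j x.
Proof. by rewrite /hs_term_eps -sumrB. Qed.

Lemma te_le eps i j x : 0 < eps -> te eps i j x <= tt i j x.
Proof.
move=> ep; rewrite /te /tt !ind_ge !ind_gt.
case: (ltrgtP (psi i j) 0) => hp.
- rewrite pos_le0 ?neg_le0; try lra.
  repeat case: ifPn => ?; lra.
- rewrite pos_ge0 ?neg_ge0; try lra.
  repeat case: ifPn => ?; lra.
- rewrite hp pos_ge0 ?neg_ge0 //; lra.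
Qed.

Lemma te_eq_pt eps i j x :
  (0 < psi i j -> (eps <= varphi i j x) = (0 < varphi i j x)) ->
  (psi i j < 0 -> (- eps < phi i j x) = (0 <= phi i j x)) ->
  te eps i j x = tt i j x.
Proof.
move=> H1 H2; rewrite /te /tt !ind_ge !ind_gt.
case: (ltrgtP (psi i j) 0) => hp.
- have h2 := H2 hp; rewrite pos_le0 ?neg_le0 ?h2; try lra.
  by rewrite !mul0r sub0r !mulNr opprK.
- have h1 := H1 hp; rewrite pos_ge0 ?neg_ge0 ?h1; try lra.
  by rewrite !mul0r subr0.
- by rewrite hp pos_ge0 ?neg_ge0 // !mul0r subr0.
Qed.

Ltac solve_pt := apply: te_eq_pt => ?; apply/idP/idP => ?; lra.

Definition cond xb i j : Prop :=
  (psi i j > 0 -> varphi i j xb = 0 -> \forall x \near xb, varphi i j x <= 0) /\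
  (psi i j < 0 -> phi i j xb = 0 -> \forall x \near xb, phi i j x >= 0).

Lemma term_ok xb i j : continuous (phi i j) -> continuous (varphi i j) ->
  exists e : R, 0 < e /\ forall eps, 0 < eps -> eps <= e ->
    te eps i j xb = tt i j xb /\
    (cond xb i j -> \forall x \near xb, te eps i j x = tt i j x).
Proof.
move=> hphi hv.
case: (ltrgtP (psi i j) 0) => hp.
- case: (ltrgtP (phi i j xb) 0) => hf.
  + exists (- phi i j xb / 2); split; first lra.
    move=> eps ep epe; split; first by solve_pt.
    move=> _; have := cvgr_lt (phi i j xb) (hphi xb) (phi i j xb / 2) ltac:(lra).
    by apply: filterS => x hx; solve_pt.
  + exists 1; split; first lra.
    move=> eps ep epe; split; first by solve_pt.
    move=> _; have := cvgr_gt (phi i j xb) (hphi xb) (0) ltac:(lra).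
    by apply: filterS => x hx; solve_pt.
  + exists 1; split; first lra.
    move=> eps ep epe; split; first by solve_pt.
    move=> [_ H]; have := H hp hf.
    by apply: filterS => x hx; solve_pt.
- case: (ltrgtP (varphi i j xb) 0) => hf.
  + exists 1; split; first lra.
    move=> eps ep epe; split; first by solve_pt.
    move=> _; have := cvgr_lt (varphi i j xb) (hv xb) (0) ltac:(lra).
    by apply: filterS => x hx; solve_pt.
  + exists (varphi i j xb / 2); split; first lra.
    move=> eps ep epe; split; first by solve_pt.
    move=> _; have := cvgr_gt (varphi i j xb) (hv xb) (varphi i j xb / 2) ltac:(lra).
    by apply: filterS => x hx; solve_pt.
  + exists 1; split; first lra.
    move=> eps ep epe; split; first by solve_pt.
    move=> [H _]; have := H hp hf.
    by apply: filterS => x hx; solve_pt.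
- exists 1; split; first lra.
  move=> eps ep epe; split; first by solve_pt.
  by move=> _; apply: filterE => x; solve_pt.
Qed.
End Terms.

Theorem proposition8 (R : realType) (n I : nat) (P : set 'rV[R]_n)
  (c : 'rV[R]_n -> R) (A : 'M[R]_(I, n)) (eta : 'I_I -> R)
  (J : nat -> nat) (psi : nat -> nat -> R)
  (phi varphi : nat -> nat -> 'rV[R]_n -> R) (xb : 'rV[R]_n) :
  closed P -> convex_set P ->
  (forall i j, continuous (phi i j)) -> (forall i j, continuous (varphi i j)) ->
  P xb ->
  exists epsb : R, 0 < epsb /\ forall eps : R, 0 < eps -> eps <= epsb ->
    (local_max (theta_MHS c J psi phi varphi) (X_MHS P A eta J psi phi varphi) xb ->
     local_max (theta_eps eps c J psi phi varphi) (X_eps eps P A eta J psi phi varphi) xb)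
    /\
    (sign_invariance I J psi phi varphi xb ->
     local_max (theta_eps eps c J psi phi varphi) (X_eps eps P A eta J psi phi varphi) xb ->
     local_max (theta_MHS c J psi phi varphi) (X_MHS P A eta J psi phi varphi) xb).
Proof.
move=> _ _ hphi hv Pxb.
have [e [e0 He]] := @fin_eps R I.+1
  (fun i eps => forall j, (j < (J i).+1)%N ->
     te psi phi varphi eps i j xb = tt psi phi varphi i j xb /\
    (cond psi phi varphi xb i j -> \forall x \near xb, te psi phi varphi eps i j x = tt psi phi varphi i j x))
  (fun i _ => fin_eps (fun j _ => term_ok psi xb (hphi i j) (hv i j))).
exists e; split => // eps ep epe.
have Hx := He eps ep epe.
have hxb : forall i, (i < I.+1)%N ->
    hs_term_eps eps J psi phi varphi i xb = hs_term J psi phi varphi i xb.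
  move=> i hi; rewrite hs_eps_sum; apply: eq_big_nat => j /andP[_ hj].
  exact: (Hx i hi j hj).1.
have hle : forall i x, hs_term_eps eps J psi phi varphi i x <= hs_term J psi phi varphi i x.
  move=> i x; rewrite hs_eps_sum; apply: ler_sum => j _; exact: te_le.
have Xsub : forall x, X_eps eps P A eta J psi phi varphi x -> X_MHS P A eta J psi phi varphi x.
  move=> x [Px Hk]; split => // k; apply: le_trans (Hk k) _; rewrite lerD2l; exact: hle.
have Xxb : X_MHS P A eta J psi phi varphi xb -> X_eps eps P A eta J psi phi varphi xb.
  move=> [_ Hk]; split => // k; rewrite hxb; [exact: Hk | exact: ltn_ord].
have thxb : theta_eps eps c J psi phi varphi xb = theta_MHS c J psi phi varphi xb.
  by rewrite /theta_eps /theta_MHS hxb.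
split.
- case=> Xm [N [NN HN]]; split; first exact: Xxb.
  exists N; split => // x Xe Nx; rewrite thxb.
  apply: le_trans (HN x (Xsub x Xe) Nx); rewrite /theta_eps /theta_MHS lerD2l; exact: hle.
- move=> SI [Xe [N [NN HN]]]; split.
    by case: Xe => Pb Hk; split => // k; rewrite -hxb; [exact: Hk | exact: ltn_ord].
  have Hnear : \forall x \near xb, forall i, (i < I.+1)%N ->
      hs_term_eps eps J psi phi varphi i x = hs_term J psi phi varphi i x.
    apply: near_fin => i hi.
    have : \forall x \near xb, forall j, (j < (J i).+1)%N -> (0 < j)%N ->
        te psi phi varphi eps i j x = tt psi phi varphi i j x.
      apply: near_fin => -[|j] hj; first by apply: filterE.
      apply: filterS ((Hx i hi j.+1 hj).2 (SI i j.+1 hi hj)) => x h _; exact: h.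
    apply: filterS => x h; rewrite hs_eps_sum; apply: eq_big_nat => j /andP[h1 h2].
    exact: h.
  exists (N `&` (fun x => forall i, (i < I.+1)%N ->
      hs_term_eps eps J psi phi varphi i x = hs_term J psi phi varphi i x)).
  split; first exact: filterI.
  move=> x [Px Hk] [Nx Ex].
  have Xex : X_eps eps P A eta J psi phi varphi x.
    by split => // k; rewrite Ex; [exact: Hk | exact: ltn_ord].
  have := HN x Xex Nx.
  by rewrite /theta_eps /theta_MHS Ex // -/(theta_eps _ _ _ _ _ _ _) thxb.
Qed.
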